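(* Let $A$ and $B$ be $\Bbbk$-algebras admitting normalized nearly Frobenius coproducts $\Delta_A$ and $\Delta_B$. Then (1) $C=A\times B$ admits a normalized nearly Frobenius coproduct, namely the one determined by $\Delta(1_C)=\sum(a_1,0)\otimes(a_2,0)+\sum(0,b_1)\otimes(0,b_2)$ where $\Delta_A(1_A)=\sum a_1\otimes a_2$ and $\Delta_B(1_B)=\sum b_1\otimes b_2$; and (2) $D=A\otimes B$ admits a normalized nearly Frobenius coproduct, namely $\Delta_D=\tau\circ(\Delta_A\otimes\Delta_B)$, where $\tau:(A\otimes A)\otimes(B\otimes B)\to(A\otimes B)\otimes(A\otimes B)$ is the transposition $a\otimes a'\otimes b\otimes b'\mapsto a\otimes b\otimes a'\otimes b'$.
   Context: Algebras are associative and unital over a field $\Bbbk$, tensor products over $\Bbbk$, $m$ denotes multiplication. A nearly Frobenius coproduct on $A$ is a $\Bbbk$-linear map $\Delta:A\to A\otimes A$ with $\Delta\circ m=(1\otimes m)\circ(\Delta\otimes 1)=(m\otimes 1)\circ(1\otimes\Delta)$ (an $A$-bimodule morphism). It is normalized if $m\circ\Delta=\operatorname{Id}_A$. *)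

(* Defs.v *)
From HB Require Import structures.
From mathcomp Require Import all_boot all_algebra.
Set Implicit Arguments. Unset Strict Implicit. Unset Printing Implicit Defensive.
Import GRing.Theory.
Local Open Scope ring_scope.

Definition lin (K : fieldType) (U W : lmodType K) (g : U -> W) : Prop :=
  forall (c : K) (u v : U), g (c *: u + v) = c *: g u + g v.

Definition bilin (K : fieldType) (U V W : lmodType K) (f : U -> V -> W) : Prop :=
  (forall v : V, lin (fun u : U => f u v)) /\ (forall u : U, lin (f u)).

Definition is_tensor (K : fieldType) (U V T : lmodType K) (t : U -> V -> T) : Prop :=
  bilin t /\
  forall (W : lmodType K) (f : U -> V -> W), bilin f ->
    (exists g : T -> W, lin g /\ forall u v, g (t u v) = f u v) /\
    (forall g1 g2 : T -> W, lin g1 -> lin g2 ->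
       (forall u v, g1 (t u v) = f u v) -> (forall u v, g2 (t u v) = f u v) ->
       forall x, g1 x = g2 x).

(* Nearly Frobenius coproduct Delta : A -> A (x) A, where A (x) A is
   realized by the tensor product (T, t).  The identities
     Delta o m = (1 (x) m) o (Delta (x) 1) = (m (x) 1) o (1 (x) Delta)
   of linear maps A (x) A -> A (x) A are stated on the spanning pure
   tensors x (x) y.  The maps (1 (x) m)(- (x) y) and (m (x) 1)(x (x) -)
   on A (x) A are the (unique) linear maps rho, lambda with
   rho (a (x) b) = a (x) b y and lambda (a (x) b) = x a (x) b. *)
Definition nearly_frobenius (K : fieldType) (A : algType K) (T : lmodType K)
    (t : A -> A -> T) (Delta : A -> T) : Prop :=
  lin Delta /\
  (forall (y : A) (rho : T -> T), lin rho ->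
     (forall a b : A, rho (t a b) = t a (b * y)) ->
     forall x : A, Delta (x * y) = rho (Delta x)) /\
  (forall (x : A) (lam : T -> T), lin lam ->
     (forall a b : A, lam (t a b) = t (x * a) b) ->
     forall y : A, Delta (x * y) = lam (Delta y)).

(* Normalized: m o Delta = Id_A, where m : A (x) A -> A is the (unique)
   linear map with m (a (x) b) = a * b. *)
Definition normalized (K : fieldType) (A : algType K) (T : lmodType K)
    (t : A -> A -> T) (Delta : A -> T) : Prop :=
  forall mu : T -> A, lin mu -> (forall a b : A, mu (t a b) = a * b) ->
    forall x : A, mu (Delta x) = x.

Definition normalized_nearly_frobenius (K : fieldType) (A : algType K)
    (T : lmodType K) (t : A -> A -> T) (Delta : A -> T) : Prop :=
  nearly_frobenius t Delta /\ normalized t Delta.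

(* Main.v *)
Require Import Defs.
From HB Require Import structures.
From mathcomp Require Import all_boot all_algebra.
From Stdlib Require Import ClassicalEpsilon.
Local Open Scope ring_scope.
Import GRing.Theory.
Set Implicit Arguments.
Set Implicit Arguments.

Section Gen.
Variable K : fieldType.

Lemma lin0 (U W : lmodType K) (g : U -> W) : lin g -> g 0 = 0.
Proof.
move=> H; have e := H 1 0 0; rewrite !scale1r addr0 in e.
by apply: (@addrI _ (g 0)); rewrite addr0 -e.
Qed.

Lemma linD (U W : lmodType K) (g : U -> W) : lin g -> forall u v, g (u + v) = g u + g v.
Proof. by move=> H u v; have := H 1 u v; rewrite !scale1r. Qed.

Lemma linZ (U W : lmodType K) (g : U -> W) : lin g -> forall c u, g (c *: u) = c *: g u.
Proof. by move=> H c u; have := H c u 0; rewrite addr0 (lin0 H) addr0. Qed.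

Lemma lin_sum (U W : lmodType K) (g : U -> W) (I : Type) (s : seq I) (F : I -> U) :
  lin g -> g (\sum_(i <- s) F i) = \sum_(i <- s) g (F i).
Proof.
move=> H; elim: s => [|x s IH]; first by rewrite !big_nil (lin0 H).
by rewrite !big_cons (linD H) IH.
Qed.

Lemma lin_comp (U V W : lmodType K) (g : V -> W) (h : U -> V) :
  lin g -> lin h -> lin (fun x => g (h x)).
Proof. by move=> Hg Hh c u v; rewrite Hh Hg. Qed.

Lemma lin_id (U : lmodType K) : lin (fun x : U => x).
Proof. by []. Qed.

Lemma bilin_comp (U V U' V' W W' : lmodType K) (t : U -> V -> W) (h : U' -> U)
  (k : V' -> V) (g : W -> W') :
  bilin t -> lin h -> lin k -> lin g -> bilin (fun u v => g (t (h u) (k v))).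
Proof.
move=> [H1 H2] Hh Hk Hg; split.
  by move=> v c x y; rewrite Hh H1 Hg.
by move=> u c x y; rewrite Hk H2 Hg.
Qed.

Lemma tensor_ex (U V T W : lmodType K) (t : U -> V -> T) (f : U -> V -> W) :
  is_tensor t -> bilin f -> exists g : T -> W, lin g /\ forall u v, g (t u v) = f u v.
Proof. by move=> [_ H] Hf; case: (H _ _ Hf). Qed.

Lemma tensor_uniq (U V T W : lmodType K) (t : U -> V -> T) (g1 g2 : T -> W) :
  is_tensor t -> lin g1 -> lin g2 -> (forall u v, g1 (t u v) = g2 (t u v)) ->
  forall x, g1 x = g2 x.
Proof.
move=> [Hb H] H1 H2 E.
have Hf : bilin (fun u v => g1 (t u v)).
  exact: (bilin_comp Hb (@lin_id _) (@lin_id _) H1).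
by case: (H _ _ Hf) => _ Hu2; apply: Hu2.
Qed.

Lemma tensor_bilin (U V T : lmodType K) (t : U -> V -> T) : is_tensor t -> bilin t.
Proof. by case. Qed.

Lemma lin_tl (U V T : lmodType K) (t : U -> V -> T) v : bilin t -> lin (fun u => t u v).
Proof. by case=> H _; apply: H. Qed.
Lemma lin_tr (U V T : lmodType K) (t : U -> V -> T) u : bilin t -> lin (t u).
Proof. by case=> _ H; apply: H. Qed.

Lemma lin_mulr (A : algType K) (y : A) : lin (fun x : A => x * y).
Proof. by move=> c u v; rewrite mulrDl scalerAl. Qed.
Lemma lin_mull (A : algType K) (y : A) : lin (fun x : A => y * x).
Proof. by move=> c u v; rewrite mulrDr scalerAr. Qed.

End Gen.

Section Pairs.
Variables (K : fieldType) (A B : algType K).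
Lemma mulpE (a a' : A) (b b' : B) : ((a, b) * (a', b') : A * B) = (a * a', b * b').
Proof. by []. Qed.
Lemma addpE (a a' : A) (b b' : B) : ((a, b) + (a', b') : A * B) = (a + a', b + b').
Proof. by []. Qed.
Lemma lin_inl : lin (fun a : A => ((a, 0) : A * B)).
Proof. by move=> c u v; rewrite /= -[RHS]/(c *: u + v, c *: 0 + 0) scaler0 addr0. Qed.
Lemma lin_inr : lin (fun b : B => ((0, b) : A * B)).
Proof. by move=> c u v; rewrite /= -[RHS]/(c *: 0 + 0, c *: u + v) scaler0 addr0. Qed.
Lemma lin_fst : lin (fun p : A * B => p.1). Proof. by []. Qed.
Lemma lin_snd : lin (fun p : A * B => p.2). Proof. by []. Qed.
End Pairs.

Theorem proposition17 (K : fieldType) (A B : algType K)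
    (* A (x) A and B (x) B *)
    (TA : lmodType K) (tA : A -> A -> TA) (TB : lmodType K) (tB : B -> B -> TB)
    (hTA : is_tensor tA) (hTB : is_tensor tB)
    (DeltaA : A -> TA) (DeltaB : B -> TB)
    (hA : normalized_nearly_frobenius tA DeltaA)
    (hB : normalized_nearly_frobenius tB DeltaB) :
  (* (1) C = A x B *)
  (forall (TC : lmodType K) (tC : (A * B)%type -> (A * B)%type -> TC),
     is_tensor tC ->
     forall (sA : seq (A * A)) (sB : seq (B * B)),
       DeltaA 1 = \sum_(p <- sA) tA p.1 p.2 ->
       DeltaB 1 = \sum_(q <- sB) tB q.1 q.2 ->
       exists DeltaC : (A * B)%type -> TC,
         normalized_nearly_frobenius tC DeltaC /\
         DeltaC 1 = \sum_(p <- sA) tC (p.1, 0) (p.2, 0)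
                    + \sum_(q <- sB) tC (0, q.1) (0, q.2)) /\
  (* (2) D = A (x) B with the tensor product algebra structure *)
  (forall (D : algType K) (d : A -> B -> D),
     is_tensor d ->
     d 1 1 = 1 ->
     (forall (a a' : A) (b b' : B), d (a * a') (b * b') = d a b * d a' b') ->
     forall (TD : lmodType K) (tD : D -> D -> TD), is_tensor tD ->
     forall (TAB : lmodType K) (tAB : TA -> TB -> TAB), is_tensor tAB ->
     (* tau : (A (x) A) (x) (B (x) B) -> (A (x) B) (x) (A (x) B) *)
     forall tau : TAB -> TD, lin tau ->
     (forall (a a' : A) (b b' : B), tau (tAB (tA a a') (tB b b')) = tD (d a b) (d a' b')) ->
     (* DeltaA (x) DeltaB : A (x) B -> (A (x) A) (x) (B (x) B) *)
     forall DeltaAB : D -> TAB, lin DeltaAB ->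
     (forall (a : A) (b : B), DeltaAB (d a b) = tAB (DeltaA a) (DeltaB b)) ->
     normalized_nearly_frobenius tD (fun x => tau (DeltaAB x))).
Proof.
have btA := tensor_bilin hTA; have btB := tensor_bilin hTB.
case: hA => [[lDA [rA lA]] nA]; case: hB => [[lDB [rB lB]] nB].
split.
  move=> TC tC hTC sA sB eA eB.
  have bC := tensor_bilin hTC.
  case: (tensor_ex (f := fun a b : A => tC (a, 0) (b, 0)) hTA
     (bilin_comp bC (@lin_inl _ A B) (@lin_inl _ A B) (@lin_id _ _))) => iA [liA HiA].
  case: (tensor_ex (f := fun a b : B => tC (0, a) (0, b)) hTB
     (bilin_comp bC (@lin_inr _ A B) (@lin_inr _ A B) (@lin_id _ _))) => iB [liB HiB].
  exists (fun x => iA (DeltaA x.1) + iB (DeltaB x.2)).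
  split; last first.
    rewrite -[(1 : A * B).1]/(1 : A) -[(1 : A * B).2]/(1 : B) eA eB.
    rewrite (lin_sum _ _ liA) (lin_sum _ _ liB).
    by congr (_ + _); apply: eq_bigr => p _; rewrite ?HiA ?HiB.
  split; last first.
    move=> mu lmu Hmu [xa xb] /=; rewrite (linD lmu).
    have EA1 := nA (fun z => (mu (iA z)).1)
       (lin_comp (@lin_fst _ A B) (lin_comp lmu liA))
       (fun a b => etrans (f_equal fst (etrans (f_equal mu (HiA a b)) (Hmu _ _))) (erefl _)).
    have EA2 : forall z, (mu (iA z)).2 = (fun _ => 0 : B) z.
      apply: (tensor_uniq (g1 := fun z => (mu (iA z)).2) (g2 := fun _ => 0 : B) hTA).
      - exact: (lin_comp (@lin_snd _ A B) (lin_comp lmu liA)).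
      - by move=> c u v; rewrite scaler0 addr0.
      by move=> a b /=; rewrite HiA Hmu /= mulr0.
    have EB1 := nB (fun z => (mu (iB z)).2)
       (lin_comp (@lin_snd _ A B) (lin_comp lmu liB))
       (fun a b => etrans (f_equal snd (etrans (f_equal mu (HiB a b)) (Hmu _ _))) (erefl _)).
    have EB2 : forall z, (mu (iB z)).1 = (fun _ => 0 : A) z.
      apply: (tensor_uniq (g1 := fun z => (mu (iB z)).1) (g2 := fun _ => 0 : A) hTB).
      - exact: (lin_comp (@lin_fst _ A B) (lin_comp lmu liB)).
      - by move=> c u v; rewrite scaler0 addr0.
      by move=> a b /=; rewrite HiB Hmu /= mulr0.
    rewrite [mu (iA _)]surjective_pairing [mu (iB _)]surjective_pairing.
    by rewrite EA1 EA2 EB1 EB2 addpE addr0 add0r.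
  split.
    move=> c [u1 u2] [v1 v2] /=.
    by rewrite lDA lDB liA liB scalerDr addrACA.
  split.
    move=> [ya yb] rho lrho Hr [xa xb].
    rewrite mulpE /=.
    case: (tensor_ex (f := fun a b : A => tA a (b * ya)) hTA
       (bilin_comp btA (@lin_id _ _) (@lin_mulr _ _ ya) (@lin_id _ _))) => rhoA [lrA HrA].
    case: (tensor_ex (f := fun a b : B => tB a (b * yb)) hTB
       (bilin_comp btB (@lin_id _ _) (@lin_mulr _ _ yb) (@lin_id _ _))) => rhoB [lrB HrB].
    rewrite (rA ya rhoA lrA HrA xa) (rB yb rhoB lrB HrB xb) (linD lrho).
    congr (_ + _).
      apply: (tensor_uniq (g1 := fun z => iA (rhoA z)) (g2 := fun z => rho (iA z)) hTA).
      - exact: lin_comp liA lrA.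
      - exact: lin_comp lrho liA.
      by move=> a b; rewrite HrA !HiA Hr mulpE mul0r.
    apply: (tensor_uniq (g1 := fun z => iB (rhoB z)) (g2 := fun z => rho (iB z)) hTB).
    - exact: lin_comp liB lrB.
    - exact: lin_comp lrho liB.
    by move=> a b; rewrite HrB !HiB Hr mulpE mul0r.
  move=> [xa xb] lam llam Hl [ya yb].
  rewrite mulpE /=.
  case: (tensor_ex (f := fun a b : A => tA (xa * a) b) hTA
     (bilin_comp btA (@lin_mull _ _ xa) (@lin_id _ _) (@lin_id _ _))) => lamA [llA HlA].
  case: (tensor_ex (f := fun a b : B => tB (xb * a) b) hTB
     (bilin_comp btB (@lin_mull _ _ xb) (@lin_id _ _) (@lin_id _ _))) => lamB [llB HlB].
  rewrite (lA xa lamA llA HlA ya) (lB xb lamB llB HlB yb) (linD llam).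
  congr (_ + _).
    apply: (tensor_uniq (g1 := fun z => iA (lamA z)) (g2 := fun z => lam (iA z)) hTA).
    - exact: lin_comp liA llA.
    - exact: lin_comp llam liA.
    by move=> a b; rewrite HlA !HiA Hl mulpE mulr0.
  apply: (tensor_uniq (g1 := fun z => iB (lamB z)) (g2 := fun z => lam (iB z)) hTB).
  - exact: lin_comp liB llB.
  - exact: lin_comp llam liB.
  by move=> a b; rewrite HlB !HiB Hl mulpE mulr0.
move=> D d hd d11 dM TD tD hTD TAB tAB hTAB tau ltau Htau DAB lDAB HDAB.
have bd := tensor_bilin hd; have btD := tensor_bilin hTD; have btAB := tensor_bilin hTAB.
have lDD : lin (fun x => tau (DAB x)) := lin_comp ltau lDAB.
split; last first.
  move=> mu lmu Hmu x.
  have bmA : bilin (fun a b : A => a * b).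
    by split; [move=> v; exact: (@lin_mulr _ _ v) | move=> u; exact: (@lin_mull _ _ u)].
  have bmB : bilin (fun a b : B => a * b).
    by split; [move=> v; exact: (@lin_mulr _ _ v) | move=> u; exact: (@lin_mull _ _ u)].
  case: (tensor_ex hTA bmA) => muA [lmA HmA].
  case: (tensor_ex hTB bmB) => muB [lmB HmB].
  have step1 : forall b1 b2 zA, mu (tau (tAB zA (tB b1 b2))) = d (muA zA) (muB (tB b1 b2)).
    move=> b1 b2.
    apply: (tensor_uniq (g1 := fun zA => mu (tau (tAB zA (tB b1 b2))))
                        (g2 := fun zA => d (muA zA) (muB (tB b1 b2))) hTA).
    - exact: lin_comp lmu (lin_comp ltau (lin_tl _ btAB)).
    - exact: lin_comp (lin_tl _ bd) lmA.
    by move=> a1 a2; rewrite Htau Hmu HmA HmB dM.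
  have step2 : forall zA zB, mu (tau (tAB zA zB)) = d (muA zA) (muB zB).
    move=> zA.
    apply: (tensor_uniq (g1 := fun zB => mu (tau (tAB zA zB)))
                        (g2 := fun zB => d (muA zA) (muB zB)) hTB).
    - exact: lin_comp lmu (lin_comp ltau (lin_tr _ btAB)).
    - exact: lin_comp (lin_tr _ bd) lmB.
    by move=> b1 b2; rewrite step1.
  apply: (tensor_uniq (g1 := fun x => mu (tau (DAB x))) (g2 := fun x => x) hd) => //.
    exact: lin_comp lmu lDD.
  by move=> a b; rewrite HDAB step2 (nA muA lmA HmA) (nB muB lmB HmB).
split; first exact: lDD.
split.
  have P : forall a' b' rho, lin rho ->
      (forall u v, rho (tD u v) = tD u (v * d a' b')) ->
      forall x, tau (DAB (x * d a' b')) = rho (tau (DAB x)).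
    move=> a' b' rho lr Hr.
    apply: (tensor_uniq (g1 := fun x => tau (DAB (x * d a' b')))
                        (g2 := fun x => rho (tau (DAB x))) hd).
    - exact: lin_comp lDD (@lin_mulr _ _ _).
    - exact: lin_comp lr lDD.
    move=> a b; rewrite -dM !HDAB.
    case: (tensor_ex (f := fun a b : A => tA a (b * a')) hTA
       (bilin_comp btA (@lin_id _ _) (@lin_mulr _ _ a') (@lin_id _ _))) => rhoA [lrA HrA].
    case: (tensor_ex (f := fun a b : B => tB a (b * b')) hTB
       (bilin_comp btB (@lin_id _ _) (@lin_mulr _ _ b') (@lin_id _ _))) => rhoB [lrB HrB].
    rewrite (rA a' rhoA lrA HrA a) (rB b' rhoB lrB HrB b).
    have step1 : forall b1 b2 zA, tau (tAB (rhoA zA) (rhoB (tB b1 b2))) = rho (tau (tAB zA (tB b1 b2))).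
      move=> b1 b2.
      apply: (tensor_uniq (g1 := fun zA => tau (tAB (rhoA zA) (rhoB (tB b1 b2))))
                          (g2 := fun zA => rho (tau (tAB zA (tB b1 b2)))) hTA).
      - exact: lin_comp ltau (lin_comp (lin_tl _ btAB) lrA).
      - exact: lin_comp lr (lin_comp ltau (lin_tl _ btAB)).
      by move=> a1 a2; rewrite HrA HrB !Htau Hr dM.
    move: (DeltaA a) (DeltaB b) => zA zB.
    apply: (tensor_uniq (g1 := fun zB => tau (tAB (rhoA zA) (rhoB zB)))
                        (g2 := fun zB => rho (tau (tAB zA zB))) hTB).
    - exact: lin_comp ltau (lin_comp (lin_tr _ btAB) lrB).
    - exact: lin_comp lr (lin_comp ltau (lin_tr _ btAB)).
    by move=> b1 b2; rewrite step1.
  have exR : forall y, exists R : TD -> TD, lin R /\ forall u v, R (tD u v) = tD u (v * y).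
    move=> y; exact: (tensor_ex hTD (bilin_comp btD (@lin_id _ _) (@lin_mulr _ _ y) (@lin_id _ _))).
  pose R y := proj1_sig (constructive_indefinite_description _ (exR y)).
  have HR : forall y, lin (R y) /\ forall u v, R y (tD u v) = tD u (v * y).
    by move=> y; rewrite /R; case: (constructive_indefinite_description _ _).
  have RlinY : forall c y y' z, R (c *: y + y') z = c *: R y z + R y' z.
    move=> c y y'.
    apply: (tensor_uniq (g1 := R (c *: y + y')) (g2 := fun z => c *: R y z + R y' z) hTD).
    - exact: (HR _).1.
    - move=> k u v; rewrite (HR y).1 (HR y').1.
      by rewrite !scalerDr !scalerA [c * k]mulrC addrACA.
    by move=> u v; rewrite !(HR _).2 mulrDr -scalerAr (lin_tr _ btD).
  move=> y rho lr Hr x.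
  have -> : rho (tau (DAB x)) = R y (tau (DAB x)).
    apply: (tensor_uniq (g1 := rho) (g2 := R y) hTD) => //; first exact: (HR y).1.
    by move=> u v; rewrite Hr (HR y).2.
  clear Hr lr rho; move: y; apply: (tensor_uniq (g1 := fun y => tau (DAB (x * y))) (g2 := fun y => R y (tau (DAB x))) hd).
  - exact: lin_comp lDD (@lin_mull _ _ _).
  - by move=> c u v; exact: RlinY.
  by move=> a' b'; apply: P; [exact: (HR _).1 | exact: (HR _).2].
have P : forall a b lam, lin lam ->
    (forall u v, lam (tD u v) = tD (d a b * u) v) ->
    forall y, tau (DAB (d a b * y)) = lam (tau (DAB y)).
  move=> a b lam ll Hl.
  apply: (tensor_uniq (g1 := fun y => tau (DAB (d a b * y)))
                      (g2 := fun y => lam (tau (DAB y))) hd).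
  - exact: lin_comp lDD (@lin_mull _ _ _).
  - exact: lin_comp ll lDD.
  move=> a' b'; rewrite -dM !HDAB.
  case: (tensor_ex (f := fun u v : A => tA (a * u) v) hTA
     (bilin_comp btA (@lin_mull _ _ a) (@lin_id _ _) (@lin_id _ _))) => lamA [llA HlA].
  case: (tensor_ex (f := fun u v : B => tB (b * u) v) hTB
     (bilin_comp btB (@lin_mull _ _ b) (@lin_id _ _) (@lin_id _ _))) => lamB [llB HlB].
  rewrite (lA a lamA llA HlA a') (lB b lamB llB HlB b').
  have step1 : forall b1 b2 zA, tau (tAB (lamA zA) (lamB (tB b1 b2))) = lam (tau (tAB zA (tB b1 b2))).
    move=> b1 b2.
    apply: (tensor_uniq (g1 := fun zA => tau (tAB (lamA zA) (lamB (tB b1 b2))))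
                        (g2 := fun zA => lam (tau (tAB zA (tB b1 b2)))) hTA).
    - exact: lin_comp ltau (lin_comp (lin_tl _ btAB) llA).
    - exact: lin_comp ll (lin_comp ltau (lin_tl _ btAB)).
    by move=> a1 a2; rewrite HlA HlB !Htau Hl dM.
  move: (DeltaA a') (DeltaB b') => zA zB.
  apply: (tensor_uniq (g1 := fun zB => tau (tAB (lamA zA) (lamB zB)))
                      (g2 := fun zB => lam (tau (tAB zA zB))) hTB).
  - exact: lin_comp ltau (lin_comp (lin_tr _ btAB) llB).
  - exact: lin_comp ll (lin_comp ltau (lin_tr _ btAB)).
  by move=> b1 b2; rewrite step1.
have exL : forall x, exists L : TD -> TD, lin L /\ forall u v, L (tD u v) = tD (x * u) v.
  move=> x; exact: (tensor_ex hTD (bilin_comp btD (@lin_mull _ _ x) (@lin_id _ _) (@lin_id _ _))).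
pose L x := proj1_sig (constructive_indefinite_description _ (exL x)).
have HL : forall x, lin (L x) /\ forall u v, L x (tD u v) = tD (x * u) v.
  by move=> x; rewrite /L; case: (constructive_indefinite_description _ _).
have LlinX : forall c x x' z, L (c *: x + x') z = c *: L x z + L x' z.
  move=> c x x'.
  apply: (tensor_uniq (g1 := L (c *: x + x')) (g2 := fun z => c *: L x z + L x' z) hTD).
  - exact: (HL _).1.
  - move=> k u v; rewrite (HL x).1 (HL x').1.
    by rewrite !scalerDr !scalerA [c * k]mulrC addrACA.
  by move=> u v; rewrite !(HL _).2 mulrDl -scalerAl (lin_tl _ btD).
move=> x lam ll Hl y.
have -> : lam (tau (DAB y)) = L x (tau (DAB y)).
  apply: (tensor_uniq (g1 := lam) (g2 := L x) hTD) => //; first exact: (HL x).1.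
  by move=> u v; rewrite Hl (HL x).2.
clear Hl ll lam; move: x; apply: (tensor_uniq (g1 := fun x => tau (DAB (x * y))) (g2 := fun x => L x (tau (DAB y))) hd).
- exact: lin_comp lDD (@lin_mulr _ _ _).
- by move=> c u v; exact: LlinX.
by move=> a b; apply: P; [exact: (HL _).1 | exact: (HL _).2].
Qed.
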